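(* Let $|\psi\rangle\in(\mathbb{C}^d)^{\otimes n}$ be a normalized state such that every element of the stabilizer of $|\psi\rangle^{\otimes 2}$ is unitary. Let $g_1,g_2$ be local invertible operators, $g_k=\bigotimes_{i=1}^n g_k^{(i)}$ with $g_k^{(i)}\in\mathrm{GL}(d,\mathbb{C})$. Then $$p^{\mathrm{SEP}}_{\max}\!\left(g_1|\psi\rangle\otimes g_2|\psi\rangle\mapsto|\psi\rangle^{\otimes 2}\right)=p^{\mathrm{SEP}}_{\max}\!\left(g_1|\psi\rangle\mapsto|\psi\rangle\right)\,p^{\mathrm{SEP}}_{\max}\!\left(g_2|\psi\rangle\mapsto|\psi\rangle\right),$$ where initial states are normalized.
   Context: The two-copy states are regarded as $n$-partite states in which party $i$ holds subsystem $i$ of both copies (local dimension $d^2$). The stabilizer of $|\psi\rangle^{\otimes 2}$ is the set of $S=\bigotimes_i S^{(i)}$ with $S^{(i)}\in\mathrm{GL}(d^2,\mathbb{C})$ and $S|\psi\rangle^{\otimes 2}=|\psi\rangle^{\otimes 2}$. $p^{\mathrm{SEP}}_{\max}(|a\rangle\mapsto|b\rangle)$ denotes the maximal success probability of transforming $|a\rangle$ into $|b\rangle$ by separable operations with respect to the relevant party partition. A separable operation is one whose Kraus operators have product form over the parties, with $\sum_k M_k^\dagger M_k\le\mathbb{1}$. Its success probability is $\sum_k\|M_k|a\rangle\|^2$, summed over the branches with $M_k|a\rangle\propto|b\rangle$. *)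

(* Defs.v *)
From mathcomp Require Import all_boot all_order all_algebra.
From mathcomp Require Import complex.
From mathcomp Require Import boolp classical_sets reals.
Set Implicit Arguments. Unset Strict Implicit. Unset Printing Implicit Defensive.
Import Order.TTheory GRing.Theory Num.Theory.
Local Open Scope ring_scope.

Section Defs.
Variable R : realType.
Local Notation C := R[i].

Definition cmod2 (z : C) : R := (complex.Re z) ^+ 2 + (complex.Im z) ^+ 2.

Definition cconj (z : C) : C := Complex (complex.Re z) (- complex.Im z).

(* n-partite states with local basis indexed by the finite type L:
   vectors in (C^L)^{(x) n}, coordinates indexed by the basis |x_1 ... x_n>. *)
Definition state (n : nat) (L : finType) := {ffun 'I_n -> L} -> C.

(* a local operator on C^L, given by its matrix entries M y x = <y|M|x> *)
Definition locop (L : finType) := L -> L -> C.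

Definition prodop (n : nat) (L : finType) := 'I_n -> locop L.

Definition prodmx n L (M : prodop n L) (y x : {ffun 'I_n -> L}) : C :=
  \prod_(i < n) M i (y i) (x i).

Definition apply n L (M : prodop n L) (v : state n L) : state n L :=
  fun y => \sum_x prodmx M y x * v x.

Definition sqnorm n L (v : state n L) : R := \sum_x cmod2 (v x).

Definition normalize n L (v : state n L) : state n L :=
  fun x => (((Num.sqrt (sqnorm v))^-1)%:C)%C * v x.

Definition normalized n L (v : state n L) : Prop := sqnorm v = 1.

Definition invertible (L : finType) (M : locop L) : Prop :=
  exists N : locop L,
    (forall y x, \sum_z M y z * N z x = (y == x)%:R) /\
    (forall y x, \sum_z N y z * M z x = (y == x)%:R).

Definition unitary n L (S : prodop n L) : Prop :=
  forall x x', \sum_y cconj (prodmx S y x) * prodmx S y x' = (x == x')%:R.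

(* two-copy state a (x) b, regarded as n-partite with party i holding
   subsystem i of both copies (local basis L * L) *)
Definition tens2 n L (a b : state n L) : state n (L * L)%type :=
  fun x => a [ffun i => (x i).1] * b [ffun i => (x i).2].

Definition stab2_unitary n L (psi : state n L) : Prop :=
  forall S : prodop n (L * L)%type,
    (forall i, invertible (S i)) ->
    apply S (tens2 psi psi) = tens2 psi psi ->
    unitary S.

(* a separable operation: finitely many product Kraus operators M_k with
   sum_k M_k^dagger M_k <= 1, i.e. sum_k ||M_k v||^2 <= ||v||^2 for all v *)
Definition separable_op n L (K : nat) (M : 'I_K -> prodop n L) : Prop :=
  forall v : state n L, \sum_(k < K) sqnorm (apply (M k) v) <= sqnorm v.

Definition succ_prob n L (K : nat) (M : 'I_K -> prodop n L) (a b : state n L) : R :=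
  \sum_(k < K | `[< exists c : C, apply (M k) a = (fun x => c * b x) >])
     sqnorm (apply (M k) a).

Definition pmax_sep n L (a b : state n L) : R :=
  sup [set p : R | exists (K : nat) (M : 'I_K -> prodop n L),
                     separable_op M /\ p = succ_prob M a b].

End Defs.

(* Main.v *)
Require Import Defs.
From mathcomp Require Import all_boot all_order all_algebra.
From mathcomp Require Import complex.
From mathcomp Require Import boolp classical_sets reals.
From mathcomp Require Import ring lra.
Import Order.TTheory GRing.Theory Num.Theory.
Local Open Scope ring_scope.
Set Implicit Arguments. Unset Strict Implicit. Unset Printing Implicit Defensive.

Lemma cconjE (R : realType) (z : R[i]) : cconj z = (z^*)%C.
Proof. by case: z. Qed.

Lemma cmod2C (R : realType) (z : R[i]) : (cmod2 z)%:C%C = z * (z^*)%C.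
Proof. case: z => a b; rewrite /cmod2 /=. apply/eqP; rewrite eq_complex /=; apply/andP; split; apply/eqP; ring. Qed.

Lemma cmod2_ge0 (R : realType) (z : R[i]) : 0 <= cmod2 z.
Proof. by rewrite /cmod2 addr_ge0 // sqr_ge0. Qed.

Lemma cmod2M (R : realType) (a b : R[i]) : cmod2 (a * b) = cmod2 a * cmod2 b.
Proof.
apply: (@complexI R); rewrite rmorphM /= !cmod2C rmorphM /=.
by rewrite mulrACA.
Qed.

Lemma cmod2_eq0 (R : realType) (z : R[i]) : cmod2 z = 0 -> z = 0.
Proof.
case: z => a b; rewrite /cmod2 /= => /eqP.
rewrite paddr_eq0 ?sqr_ge0 // !sqrf_eq0 => /andP[/eqP-> /eqP->] //.
Qed.

Lemma cmod2_1 (R : realType) : cmod2 (1 : R[i]) = 1.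
Proof. by rewrite /cmod2 /= expr0n /= addr0 expr1n. Qed.

Lemma sqnorm_ge0 (R : realType) n (L : finType) (v : state R n L) : 0 <= sqnorm v.
Proof. by apply: sumr_ge0 => x _; apply: cmod2_ge0. Qed.

Lemma sqnormC (R : realType) n (L : finType) (v : state R n L) :
  (sqnorm v)%:C%C = \sum_x v x * ((v x)^*)%C.
Proof. rewrite /sqnorm rmorph_sum; apply: eq_bigr => x _; exact: cmod2C. Qed.

Lemma sqnorm_eq0 (R : realType) n (L : finType) (v : state R n L) :
  sqnorm v = 0 -> forall x, v x = 0.
Proof.
move=> /eqP; rewrite psumr_eq0; last by move=> x _; apply: cmod2_ge0.
by move=> /allP H x; apply: cmod2_eq0; apply/eqP; apply: H; rewrite mem_index_enum.
Qed.

Lemma sqnormZ (R : realType) n (L : finType) (c : R[i]) (v : state R n L) :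
  sqnorm (fun x => c * v x) = cmod2 c * sqnorm v.
Proof. by rewrite /sqnorm mulr_sumr; apply: eq_bigr => x _; rewrite cmod2M. Qed.

Lemma applyZ (R : realType) n (L : finType) (M : prodop R n L) (c : R[i]) (v : state R n L) :
  apply M (fun x => c * v x) = (fun y => c * apply M v y).
Proof.
apply: funext => y; rewrite /apply mulr_sumr; apply: eq_bigr => x _.
by rewrite mulrCA.
Qed.

Definition idop (R : realType) n (L : finType) : prodop R n L :=
  fun _ y x => (y == x)%:R.

Definition comp (R : realType) n (L : finType) (A B : prodop R n L) : prodop R n L :=
  fun i y x => \sum_z A i y z * B i z x.

Lemma prodmx_id (R : realType) n (L : finType) (y x : {ffun 'I_n -> L}) :
  prodmx (@idop R n L) y x = (y == x)%:R.
Proof.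
rewrite /prodmx /idop; case: eqP => [->|neq].
  by rewrite big1 // => i _; rewrite eqxx.
have [i Hi] : exists i, y i != x i.
  apply: contrapT => H; apply: neq; apply/ffunP => i.
  by apply/eqP; apply: contrapT => Hn; apply: H; exists i; apply/negP.
by rewrite (bigD1 i) //= (negbTE Hi) mul0r.
Qed.

Lemma apply_id (R : realType) n (L : finType) (v : state R n L) :
  apply (@idop R n L) v = v.
Proof.
apply: funext => y; rewrite /apply (bigD1 y) //= prodmx_id eqxx mul1r big1 ?addr0 //.
by move=> x Hx; rewrite prodmx_id eq_sym (negbTE Hx) mul0r.
Qed.

Lemma prodmx_comp (R : realType) n (L : finType) (A B : prodop R n L) y x :
  prodmx (comp A B) y x = \sum_z prodmx A y z * prodmx B z x.
Proof.
rewrite /prodmx /comp bigA_distr_bigA /=; apply: eq_bigr => z _.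
by rewrite -big_split.
Qed.

Lemma apply_comp (R : realType) n (L : finType) (A B : prodop R n L) v :
  apply (comp A B) v = apply A (apply B v).
Proof.
apply: funext => y; rewrite /apply.
under eq_bigr do rewrite prodmx_comp mulr_suml.
rewrite exchange_big /=; apply: eq_bigr => z _.
by rewrite mulr_sumr; apply: eq_bigr => x _; rewrite mulrA.
Qed.

Lemma comp_id (R : realType) n (L : finType) (A B : prodop R n L) :
  (forall i y x, \sum_z A i y z * B i z x = (y == x)%:R) ->
  comp A B = @idop R n L.
Proof. by move=> H; apply: funext => i; apply: funext => y; apply: funext => x; apply: H. Qed.

Lemma apply_inv (R : realType) n (L : finType) (A B : prodop R n L) :
  (forall i y x, \sum_z A i y z * B i z x = (y == x)%:R) ->
  forall v, apply A (apply B v) = v.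
Proof. by move=> H v; rewrite -apply_comp comp_id // apply_id. Qed.

Definition pairf n (L : finType) (x1 x2 : {ffun 'I_n -> L}) : {ffun 'I_n -> (L * L)%type} :=
  [ffun i => (x1 i, x2 i)].
Definition fstf n (L : finType) (x : {ffun 'I_n -> (L * L)%type}) : {ffun 'I_n -> L} :=
  [ffun i => (x i).1].
Definition sndf n (L : finType) (x : {ffun 'I_n -> (L * L)%type}) : {ffun 'I_n -> L} :=
  [ffun i => (x i).2].

Lemma pairfK n (L : finType) (x : {ffun 'I_n -> (L * L)%type}) : pairf (fstf x) (sndf x) = x.
Proof. by apply/ffunP => i; rewrite !ffunE; case: (x i). Qed.
Lemma fstf_pair n (L : finType) (a b : {ffun 'I_n -> L}) : fstf (pairf a b) = a.
Proof. by apply/ffunP => i; rewrite !ffunE. Qed.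
Lemma sndf_pair n (L : finType) (a b : {ffun 'I_n -> L}) : sndf (pairf a b) = b.
Proof. by apply/ffunP => i; rewrite !ffunE. Qed.

Lemma sum_pair (R : realType) n (L : finType) (F : {ffun 'I_n -> (L * L)%type} -> R[i]) :
  \sum_x F x = \sum_x1 \sum_x2 F (pairf x1 x2).
Proof.
rewrite pair_big /=.
rewrite (reindex (fun p : {ffun 'I_n -> L} * {ffun 'I_n -> L} => pairf p.1 p.2)) //=.
exists (fun x => (fstf x, sndf x)) => [[a b] _|x _] /=.
  by rewrite fstf_pair sndf_pair.
by rewrite pairfK.
Qed.

Lemma sum_pairR (R : realType) n (L : finType) (F : {ffun 'I_n -> (L * L)%type} -> R) :
  \sum_x F x = \sum_x1 \sum_x2 F (pairf x1 x2).
Proof.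
rewrite pair_big /=.
rewrite (reindex (fun p : {ffun 'I_n -> L} * {ffun 'I_n -> L} => pairf p.1 p.2)) //=.
exists (fun x => (fstf x, sndf x)) => [[a b] _|x _] /=.
  by rewrite fstf_pair sndf_pair.
by rewrite pairfK.
Qed.

Definition tensop (R : realType) n (L : finType) (A B : prodop R n L) : prodop R n (L * L)%type :=
  fun i y x => A i y.1 x.1 * B i y.2 x.2.

Lemma prodmx_tens (R : realType) n (L : finType) (A B : prodop R n L) y1 y2 x1 x2 :
  prodmx (tensop A B) (pairf y1 y2) (pairf x1 x2) = prodmx A y1 x1 * prodmx B y2 x2.
Proof. by rewrite /prodmx /tensop -big_split; apply: eq_bigr => i _; rewrite !ffunE. Qed.

Lemma tens2_pair (R : realType) n (L : finType) (a b : state R n L) x1 x2 :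
  tens2 a b (pairf x1 x2) = a x1 * b x2.
Proof. by rewrite /tens2 -/(fstf _) -/(sndf _) fstf_pair sndf_pair. Qed.

Lemma apply_tens_pair (R : realType) n (L : finType) (A B : prodop R n L) w y1 y2 :
  apply (tensop A B) w (pairf y1 y2) =
  \sum_x1 \sum_x2 prodmx A y1 x1 * prodmx B y2 x2 * w (pairf x1 x2).
Proof.
rewrite /apply sum_pair; apply: eq_bigr => x1 _; apply: eq_bigr => x2 _.
by rewrite prodmx_tens.
Qed.

Lemma apply_tens2 (R : realType) n (L : finType) (A B : prodop R n L) (a b : state R n L) :
  apply (tensop A B) (tens2 a b) = tens2 (apply A a) (apply B b).
Proof.
apply: funext => x; rewrite -[x]pairfK apply_tens_pair tens2_pair /apply mulr_suml.
apply: eq_bigr => x1 _; rewrite mulr_sumr; apply: eq_bigr => x2 _.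
by rewrite tens2_pair mulrACA.
Qed.

Lemma sqnorm_pair (R : realType) n (L : finType) (w : state R n (L * L)%type) :
  sqnorm w = \sum_x1 \sum_x2 cmod2 (w (pairf x1 x2)).
Proof. by rewrite /sqnorm sum_pairR. Qed.

Lemma sqnorm_tens2 (R : realType) n (L : finType) (a b : state R n L) :
  sqnorm (tens2 a b) = sqnorm a * sqnorm b.
Proof.
rewrite sqnorm_pair /sqnorm mulr_suml; apply: eq_bigr => x1 _.
by rewrite mulr_sumr; apply: eq_bigr => x2 _; rewrite tens2_pair cmod2M.
Qed.

Lemma sum_prodT (R : realType) (L : finType) (F : (L * L)%type -> R[i]) :
  \sum_z F z = \sum_z1 \sum_z2 F (z1, z2).
Proof. by rewrite pair_big; apply: eq_bigr => [[]]. Qed.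

Lemma tens_locinv (R : realType) n (L : finType) (A B A' B' : prodop R n L) i :
  (forall y x, \sum_z A i y z * A' i z x = (y == x)%:R) ->
  (forall y x, \sum_z B i y z * B' i z x = (y == x)%:R) ->
  forall y x, \sum_z tensop A B i y z * tensop A' B' i z x = (y == x)%:R.
Proof.
move=> HA HB [y1 y2] [x1 x2]; rewrite /tensop /= sum_prodT /=.
rewrite xpair_eqE -mulnb natrM -HA -HB mulr_suml; apply: eq_bigr => z1 _.
by rewrite mulr_sumr; apply: eq_bigr => z2 _; rewrite /= mulrACA.
Qed.

Lemma unitary_iso (R : realType) n (L : finType) (S : prodop R n L) :
  unitary S -> forall v, sqnorm (apply S v) = sqnorm v.
Proof.
move=> HU v; apply: (@complexI R).
rewrite !sqnormC /apply.
transitivity (\sum_x \sum_x' v x * ((v x')^*)%C *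
   (\sum_y prodmx S y x * ((prodmx S y x')^*)%C)).
  under eq_bigr do rewrite rmorph_sum /= mulr_suml.
  rewrite exchange_big /=; apply: eq_bigr => x _.
  under eq_bigr do rewrite mulr_sumr.
  rewrite exchange_big /=; apply: eq_bigr => x' _.
  rewrite mulr_sumr; apply: eq_bigr => y _; rewrite rmorphM /=.
  by ring.
have Hx : forall x x', \sum_y prodmx S y x * ((prodmx S y x')^*)%C = (x' == x)%:R.
  move=> x x'; rewrite -HU; apply: eq_bigr => y _; by rewrite cconjE mulrC.
under eq_bigr => x _ do under eq_bigr => x' _ do rewrite Hx.
apply: eq_bigr => x _; rewrite (bigD1 x) //= big1 ?addr0 ?eqxx ?mulr1 //.
by move=> x' Hx'; rewrite (negbTE Hx') mulr0.
Qed.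

Definition upd n (L : finType) (y : {ffun 'I_n -> L}) (i : 'I_n) (z : L) : {ffun 'I_n -> L} :=
  [ffun j => if j == i then z else y j].

Lemma upd_i n (L : finType) (y : {ffun 'I_n -> L}) i z : upd y i z i = z.
Proof. by rewrite ffunE eqxx. Qed.
Lemma upd_j n (L : finType) (y : {ffun 'I_n -> L}) i z j : j != i -> upd y i z j = y j.
Proof. by move=> H; rewrite ffunE (negbTE H). Qed.

Definition Doff (R : realType) n (L : finType) (i : 'I_n) (y x : {ffun 'I_n -> L}) : R[i] :=
  \prod_(j | j != i) ((y j == x j)%:R).

Lemma Doff_eq (R : realType) n (L : finType) i (y x : {ffun 'I_n -> L}) :
  Doff R i y x = (x == upd y i (x i))%:R.
Proof.
rewrite /Doff; case: eqP => [E|NE].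
  by apply: big1 => j Hj; rewrite E upd_j // eqxx.
have [j Hj Hyx] : exists2 j, j != i & y j != x j.
  apply: contrapT => H; apply: NE; apply/ffunP => j; rewrite ffunE.
  case: eqP => [->//|/eqP Hj]; apply/eqP; rewrite eq_sym.
  by apply: contrapT => /negP Hn; apply: H; exists j.
by rewrite (bigD1 j) //= (negbTE Hyx) mul0r.
Qed.

Lemma sum_delta (R : realType) (T : finType) (u : T) (F : T -> R[i]) :
  \sum_x (x == u)%:R * F x = F u.
Proof.
rewrite (bigD1 u) //= eqxx mul1r big1 ?addr0 // => x Hx.
by rewrite (negbTE Hx) mul0r.
Qed.

Lemma sum_Doff (R : realType) n (L : finType) i (y : {ffun 'I_n -> L}) (F : {ffun 'I_n -> L} -> R[i]) :
  \sum_x Doff R i y x * F x = \sum_z F (upd y i z).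
Proof.
transitivity (\sum_z \sum_x (x == upd y i z)%:R * F x); last first.
  by apply: eq_bigr => z _; rewrite sum_delta.
rewrite exchange_big /=; apply: eq_bigr => x _.
rewrite -mulr_suml Doff_eq; congr (_ * _).
rewrite (bigD1 (x i)) //= big1 ?addr0 // => z Hz.
case: eqP => // E; move: Hz; rewrite {1}E upd_i eqxx //.
Qed.

Lemma prodmx_split (R : realType) n (L : finType) (M : prodop R n L) i y x :
  prodmx M y x = M i (y i) (x i) * \prod_(j | j != i) M j (y j) (x j).
Proof. by rewrite /prodmx (bigD1 i). Qed.

Lemma Doff_upd (R : realType) n (L : finType) i (y0 y : {ffun 'I_n -> L}) z :
  Doff R i y0 (upd y i z) = Doff R i y0 y.
Proof. by apply: eq_bigr => j Hj; rewrite upd_j. Qed.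

Lemma sum_enum (R : realType) (L : finType) (F : L -> R[i]) :
  \sum_z F z = \sum_(b < #|L|) F (enum_val b).
Proof.
rewrite (reindex (@enum_val L (pred_of_simpl predT))) //=.
by exists enum_rank => [b _|z _]; rewrite ?enum_valK ?enum_rankK.
Qed.

Lemma kernel_vec (R : realType) (L : finType) (M : locop R L) :
  ~ invertible M ->
  exists w : L -> R[i], (exists z, w z != 0) /\ forall x, \sum_y w y * M y x = 0.
Proof.
move=> Hni.
pose A : 'M[R[i]]_#|L| := \matrix_(a, b) M (enum_val a) (enum_val b).
case: (boolP (A \in unitmx)) => HA.
  exfalso; apply: Hni.
  exists (fun z x => invmx A (enum_rank z) (enum_rank x)); split => y x.
    have := congr1 (fun B : 'M_#|L| => B (enum_rank y) (enum_rank x)) (mulmxV HA).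
    rewrite !mxE (inj_eq enum_rank_inj) => <-; rewrite sum_enum.
    by apply: eq_bigr => b _; rewrite mxE !enum_rankK enum_valK.
  have := congr1 (fun B : 'M_#|L| => B (enum_rank y) (enum_rank x)) (mulVmx HA).
  rewrite !mxE (inj_eq enum_rank_inj) => <-; rewrite sum_enum.
  by apply: eq_bigr => b _; rewrite mxE !enum_rankK enum_valK.
have : \det A == 0.
  by move: HA; rewrite unitmxE unitfE negbK.
move=> /det0P [v Hv HvA].
exists (fun z => v 0 (enum_rank z)); split.
  apply: contrapT => H; apply/negP: Hv; rewrite negbK; apply/eqP/matrixP => a b.
  rewrite mxE ord1; apply: contrapT => /eqP Hb; apply: H.
  by exists (enum_val b); rewrite enum_valK.
move=> x; rewrite sum_enum.
transitivity ((v *m A) 0 (enum_rank x)); last by rewrite HvA mxE.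
by rewrite mxE; apply: eq_bigr => b _; rewrite mxE enum_valK enum_rankK.
Qed.

Definition Pnp (R : realType) n (L : finType) (Phi : state R n L) : Prop :=
  forall S : prodop R n L, (forall i, invertible (S i)) -> apply S Phi = Phi ->
  forall v, sqnorm (apply S v) = sqnorm v.

Definition Sw (R : realType) n (L : finType) (w : L -> R[i]) (i : 'I_n) : prodop R n L :=
  fun j y x => if j == i then (y == x)%:R + ((w y)^*)%C * w x else (y == x)%:R.

Lemma prodmx_Sw (R : realType) n (L : finType) (w : L -> R[i]) (i : 'I_n) (y x : {ffun 'I_n -> L}) :
  prodmx (Sw w i) y x = ((y i == x i)%:R + ((w (y i))^*)%C * w (x i)) * Doff R i y x.
Proof.
rewrite (prodmx_split _ i) /Sw eqxx; congr (_ * _).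
by apply: eq_bigr => j Hj; rewrite (negbTE Hj).
Qed.

Lemma apply_Sw (R : realType) n (L : finType) (w : L -> R[i]) (i : 'I_n) (v : state R n L) y :
  apply (Sw w i) v y = v y + ((w (y i))^*)%C * \sum_z w z * v (upd y i z).
Proof.
rewrite /apply; under eq_bigr do rewrite prodmx_Sw !mulrDl.
rewrite big_split /=; congr (_ + _).
  rewrite -{2}(apply_id v) /apply; apply: eq_bigr => x _.
  by rewrite (prodmx_split _ i) /idop.
rewrite mulr_sumr.
transitivity (\sum_z ((w (y i))^*)%C * (w (upd y i z i) * v (upd y i z))); last first.
  by apply: eq_bigr => z _; rewrite upd_i.
rewrite -(@sum_Doff R n L i y (fun x => ((w (y i))^*)%C * (w (x i) * v x))).
by apply: eq_bigr => x _; ring.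
Qed.

Lemma Sw_fix (R : realType) n (L : finType) (w : L -> R[i]) (T : prodop R n L) (i : 'I_n)
    (Phi : state R n L) (c : R[i]) :
  (forall x, \sum_y w y * T i y x = 0) ->
  apply T Phi = (fun x => c * Phi x) -> c != 0 -> apply (Sw w i) Phi = Phi.
Proof.
move=> Hw HT Hc; apply: funext => y; rewrite apply_Sw.
have HPhi : forall u, Phi u = c^-1 * apply T Phi u.
  by move=> u; rewrite HT mulrA mulVf // mul1r.
suff -> : \sum_z w z * Phi (upd y i z) = 0 by rewrite mulr0 addr0.
under eq_bigr do rewrite HPhi /apply mulr_sumr mulr_sumr.
rewrite exchange_big /=; apply: big1 => x _.
under eq_bigr do rewrite (prodmx_split _ i) upd_i.
have -> : \sum_z w z * (c^-1 * (T i z (x i) * \prod_(j | j != i) T j (upd y i z j) (x j) * Phi x))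
   = (\sum_z w z * T i z (x i)) * (c^-1 * \prod_(j | j != i) T j (y j) (x j) * Phi x).
  rewrite mulr_suml; apply: eq_bigr => z _.
  have -> : \prod_(j | j != i) T j (upd y i z j) (x j) = \prod_(j | j != i) T j (y j) (x j).
    by apply: eq_bigr => j Hj; rewrite upd_j.
  by ring.
by rewrite Hw mul0r.
Qed.

Lemma id_locinv (R : realType) (L : finType) (y x : L) :
  \sum_z ((y == z)%:R : R[i]) * (z == x)%:R = (y == x)%:R.
Proof.
under eq_bigr do rewrite eq_sym.
by rewrite sum_delta eq_sym.
Qed.

Lemma id_invertible (R : realType) (L : finType) :
  invertible (fun y x : L => ((y == x)%:R : R[i])).
Proof. by exists (fun y x => (y == x)%:R); split => y x; apply: id_locinv. Qed.

Definition wnorm (R : realType) (L : finType) (w : L -> R[i]) : R := \sum_z cmod2 (w z).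

Lemma wnormC (R : realType) (L : finType) (w : L -> R[i]) :
  (wnorm w)%:C%C = \sum_z w z * ((w z)^*)%C.
Proof. by rewrite /wnorm rmorph_sum; apply: eq_bigr => x _; exact: cmod2C. Qed.

Lemma wnorm_gt0 (R : realType) (L : finType) (w : L -> R[i]) :
  (exists z, w z != 0) -> 0 < wnorm w.
Proof.
move=> [z Hz]; rewrite lt_def sumr_ge0 ?andbT; last by move=> x _; apply: cmod2_ge0.
apply/negP => /eqP; rewrite /wnorm => /eqP; rewrite psumr_eq0; last by move=> x _; apply: cmod2_ge0.
move=> /allP H; move/negP: Hz; apply; apply/eqP; apply: cmod2_eq0; apply/eqP.
by apply: H; rewrite mem_index_enum.
Qed.

Lemma sum_delta_r (R : realType) (T : finType) (u : T) (F : T -> R[i]) :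
  \sum_x F x * (x == u)%:R = F u.
Proof. by under eq_bigr do rewrite mulrC; rewrite sum_delta. Qed.

Lemma onepC_neq0 (R : realType) (s : R) : 0 <= s -> (1 + s%:C%C : R[i]) != 0.
Proof.
move=> Hs; rewrite -(rmorph1 (real_complex R)) -rmorphD.
apply/eqP => /(@complexI R) H; move: Hs; rewrite -[s](addKr 1) H addr0.
by rewrite oppr_ge0 ler10.
Qed.

Lemma Sw_invertible (R : realType) n (L : finType) (w : L -> R[i]) (i : 'I_n) j :
  invertible (Sw w i j).
Proof.
rewrite /Sw; case: eqP => _; last by apply: id_invertible.
apply: contrapT => /kernel_vec [u [[z Hz] Hu]].
pose a := \sum_y u y * ((w y)^*)%C.
have Hux : forall x, u x = - a * w x.
  move=> x; have := Hu x; under eq_bigr do rewrite mulrDr.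
  rewrite big_split /= sum_delta_r.
  have -> : \sum_y u y * (((w y)^*)%C * w x) = a * w x.
    by rewrite /a mulr_suml; apply: eq_bigr => y _; rewrite mulrA.
  by move/eqP; rewrite addr_eq0 => /eqP ->; rewrite mulNr.
have Ha : a * (1 + (wnorm w)%:C%C) = 0.
  rewrite wnormC mulrDr mulr1 mulr_sumr {1}/a -big_split /=.
  by apply: big1 => y _; rewrite Hux; ring.
have : a = 0.
  by move/eqP: Ha; rewrite mulf_eq0 (negbTE (onepC_neq0 _)) ?orbF => [/eqP//|];
     rewrite /wnorm sumr_ge0 // => x _; apply: cmod2_ge0.
by move=> a0; move/negP: Hz; apply; rewrite Hux a0 oppr0 mul0r.
Qed.

Lemma Doff_idem (R : realType) n (L : finType) (i : 'I_n) (y x : {ffun 'I_n -> L}) :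
  Doff R i y x * ((Doff R i y x)^*)%C = Doff R i y x.
Proof. by rewrite Doff_eq conjc_nat; case: (_ == _); rewrite /= ?mulr1 ?mulr0. Qed.

Lemma cmod2_1pR (R : realType) (s : R) : cmod2 (1 + s%:C%C : R[i]) = (1 + s) ^+ 2.
Proof. by rewrite /cmod2 /= addr0 expr0n /= addr0. Qed.

Lemma sing_excl (R : realType) n (L : finType) (Phi : state R n L) (T : prodop R n L) (c : R[i]) :
  Pnp Phi -> apply T Phi = (fun x => c * Phi x) -> c != 0 -> forall i, invertible (T i).
Proof.
move=> HP HT Hc i; apply: contrapT => /kernel_vec [w [[z0 Hz0] Hw]].
pose y0 : {ffun 'I_n -> L} := [ffun=> z0].
pose v0 : state R n L := fun x => ((w (x i))^*)%C * Doff R i y0 x.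
pose s := wnorm w.
have Hs : 0 < s := wnorm_gt0 (ex_intro _ z0 Hz0).
have HSv : apply (Sw w i) v0 = (fun y => (1 + s%:C%C) * v0 y).
  apply: funext => y; rewrite apply_Sw.
  have -> : \sum_z w z * v0 (upd y i z) = s%:C%C * Doff R i y0 y.
    rewrite /s wnormC mulr_suml; apply: eq_bigr => z _.
    by rewrite /v0 upd_i Doff_upd; ring.
  by rewrite /v0; ring.
have Hv0 : sqnorm v0 = s.
  apply: (@complexI R); rewrite sqnormC /s wnormC.
  transitivity (\sum_x Doff R i y0 x * (((w (x i))^*)%C * w (x i))).
    apply: eq_bigr => x _; by rewrite /v0 rmorphM /= conjcK -{3}(Doff_idem R i y0 x) mulrACA mulrC.
  transitivity (\sum_z ((w (upd y0 i z i))^*)%C * w (upd y0 i z i)).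
    exact: (@sum_Doff R n L i y0 (fun x => ((w (x i))^*)%C * w (x i))).
  by apply: eq_bigr => z _; rewrite upd_i mulrC.
have := HP (Sw w i) (Sw_invertible w i) (Sw_fix Hw HT Hc) v0.
rewrite HSv sqnormZ Hv0 cmod2_1pR => H.
have H2 : s * s * (2 + s) = (1 + s) ^+ 2 * s - s by ring.
rewrite H subrr in H2.
move/eqP: H2; rewrite !mulf_eq0 (gt_eqF Hs) /= => /eqP H2.
by move: Hs; rewrite -[s]addr0 -H2 addrA addrC -ltrBrDl; lra.
Qed.

Lemma apply_n0 (R : realType) (L : finType) (A : prodop R 0 L) (v : state R 0 L) :
  apply A v = v.
Proof.
apply: funext => y; rewrite /apply (bigD1 y) //= big1 ?addr0.
  by rewrite /prodmx big_ord0 mul1r.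
move=> x Hx; exfalso; move/negP: Hx; apply; apply/eqP/ffunP => i; case: i => [] //.
Qed.

Definition scl (R : realType) n (L : finType) (a : R[i]) (A : prodop R n L) : prodop R n L :=
  fun j y x => if val j == 0%N then a * A j y x else A j y x.

Lemma prodmx_scl (R : realType) k (L : finType) (a : R[i]) (A : prodop R k.+1 L) y x :
  prodmx (scl a A) y x = a * prodmx A y x.
Proof.
rewrite !(prodmx_split _ ord0) /scl /= mulrA; congr (_ * _).
by apply: eq_bigr => j Hj; rewrite -(inj_eq val_inj) /= in Hj; rewrite (negbTE Hj).
Qed.

Lemma apply_scl (R : realType) k (L : finType) (a : R[i]) (A : prodop R k.+1 L) v :
  apply (scl a A) v = (fun y => a * apply A v y).
Proof.
apply: funext => y; rewrite /apply mulr_sumr; apply: eq_bigr => x _.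
by rewrite prodmx_scl mulrA.
Qed.

Lemma invertible_scale (R : realType) (L : finType) (M : locop R L) (a : R[i]) :
  invertible M -> a != 0 -> invertible (fun y x => a * M y x).
Proof.
move=> [N [H1 H2]] Ha; exists (fun y x => a^-1 * N y x); split => y x.
  rewrite -(H1 y x); apply: eq_bigr => z _.
  by rewrite mulrACA mulfV // mul1r.
rewrite -(H2 y x); apply: eq_bigr => z _.
by rewrite mulrACA mulVf // mul1r.
Qed.

Lemma scl_invertible (R : realType) n (L : finType) (a : R[i]) (A : prodop R n L) :
  (forall i, invertible (A i)) -> a != 0 -> forall i, invertible (scl a A i).
Proof.
move=> HA Ha i; rewrite /scl; case: (val i == 0%N); last exact: HA.
exact: invertible_scale.
Qed.

Lemma cmod2V (R : realType) (c : R[i]) : c != 0 -> cmod2 c^-1 * cmod2 c = 1.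
Proof. by move=> Hc; rewrite -cmod2M mulVf // cmod2_1. Qed.

Lemma iso_of_fix (R : realType) n (L : finType) (Phi : state R n L) (T : prodop R n L) (c : R[i]) :
  sqnorm Phi = 1 -> Pnp Phi -> apply T Phi = (fun x => c * Phi x) -> c != 0 ->
  forall v, sqnorm (apply T v) = cmod2 c * sqnorm v.
Proof.
move=> Hn HP HT Hc; case: n Phi T Hn HP HT => [|k] Phi T Hn HP HT v.
  have Hc1 : c = 1.
    have [x Hx] : exists x, Phi x != 0.
      apply: contrapT => H; move: Hn; rewrite /sqnorm big1 => [/eqP|x _].
        by rewrite eq_sym oner_eq0.
      have -> : Phi x = 0 by apply/eqP; apply: contrapT => Hx; apply: H; exists x; apply/negP.
      by rewrite /cmod2 /= expr0n /= addr0.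
    have := congr1 (fun f => f x) HT; rewrite apply_n0 /= => /eqP.
    rewrite -subr_eq0 -{1}[Phi x]mul1r -mulrBl mulf_eq0 (negbTE Hx) orbF subr_eq0.
    by move/eqP.
  by rewrite apply_n0 Hc1 cmod2_1 mul1r.
have Hinv := sing_excl HP HT Hc.
have HS := HP (scl c^-1 T) (scl_invertible Hinv (invr_neq0 Hc)).
have := HS _ v; rewrite !apply_scl HT.
have -> : (fun y => c^-1 * (c * Phi y)) = Phi.
  by apply: funext => y; rewrite mulrA mulVf // mul1r.
move=> /(_ erefl); rewrite sqnormZ => <-.
by rewrite mulrA [cmod2 c * _]mulrC cmod2V // mul1r.
Qed.

Definition Qset (R : realType) n (L : finType) (h : prodop R n L) : set R :=
  [set mu | 0 <= mu /\ forall v, mu * sqnorm (apply h v) <= sqnorm v].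
Definition Qs (R : realType) n (L : finType) (h : prodop R n L) : R := sup (Qset h).

Lemma cmod2R (R : realType) (x : R) : cmod2 (x%:C%C : R[i]) = x ^+ 2.
Proof. by rewrite /cmod2 /= expr0n /= addr0. Qed.

Lemma cmod2_0 (R : realType) : cmod2 (0 : R[i]) = 0.
Proof. by rewrite /cmod2 /= expr0n /= addr0. Qed.

Lemma apply0 (R : realType) n (L : finType) (h : prodop R n L) :
  apply h (fun _ => 0) = (fun _ => 0).
Proof. by apply: funext => y; rewrite /apply big1 // => x _; rewrite mulr0. Qed.

Lemma sum_cond_le (R : realType) K (P : pred 'I_K) (f : 'I_K -> R) :
  (forall k, 0 <= f k) -> \sum_(k < K | P k) f k <= \sum_(k < K) f k.
Proof.
move=> Hf; rewrite big_mkcond; apply: ler_sum => k _.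
by case: (P k).
Qed.

Lemma succ_le (R : realType) n (L : finType) K (M : 'I_K -> prodop R n L) (a b : state R n L) :
  separable_op M -> succ_prob M a b <= sqnorm a.
Proof.
move=> HM; apply: le_trans (HM a); apply: sum_cond_le => k; exact: sqnorm_ge0.
Qed.

Lemma succ_ge0 (R : realType) n (L : finType) K (M : 'I_K -> prodop R n L) (a b : state R n L) :
  0 <= succ_prob M a b.
Proof. by apply: sumr_ge0 => k _; exact: sqnorm_ge0. Qed.

Lemma succ1 (R : realType) n (L : finType) (M : 'I_1 -> prodop R n L) (A Phi : state R n L) :
  (exists c, apply (M ord0) A = (fun x => c * Phi x)) ->
  succ_prob M A Phi = sqnorm (apply (M ord0) A).
Proof. by move=> HMc; rewrite /succ_prob big_mkcond big_ord1 (asboolT HMc). Qed.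

Lemma lower_exists (R : realType) n (L : finType) (Phi A : state R n L) (h : prodop R n L)
    (kap : R[i]) (mu : R) :
  sqnorm Phi = 1 -> sqnorm A = 1 ->
  apply h A = (fun x => kap * Phi x) -> Qset h mu ->
  exists p, (exists K (M : 'I_K -> prodop R n L), separable_op M /\ p = succ_prob M A Phi)
            /\ mu * cmod2 kap <= p.
Proof.
move=> HPhi HA HhA [Hmu0 Hmu].
case: n Phi A h HPhi HA HhA Hmu => [|k] Phi A h HPhi HA HhA Hmu.
  exists (sqnorm (apply h A)); split.
    exists 1%N, (fun _ => h); split.
      by move=> v; rewrite big_ord1 apply_n0.
    by rewrite succ1 //; exists kap.
  have Hk : cmod2 kap = 1.
    by have := congr1 (@sqnorm R 0 L) HhA; rewrite apply_n0 sqnormZ HPhi HA mulr1.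
  rewrite Hk apply_n0 HA mulr1.
  by have := Hmu A; rewrite apply_n0 HA mulr1.
pose M : 'I_1 -> prodop R k.+1 L := fun _ => scl (Num.sqrt mu)%:C%C h.
exists (succ_prob M A Phi); split.
  exists 1%N, M; split => //.
  by move=> v; rewrite big_ord1 /M apply_scl sqnormZ cmod2R sqr_sqrtr //; apply: Hmu.
rewrite succ1 /M apply_scl.
  by rewrite sqnormZ cmod2R sqr_sqrtr // HhA sqnormZ HPhi mulr1.
exists ((Num.sqrt mu)%:C%C * kap); rewrite HhA.
by apply: funext => x; rewrite mulrA.
Qed.

Lemma pmax_formula (R : realType) n (L : finType) (Phi : state R n L) (g h : prodop R n L) :
  sqnorm Phi = 1 -> Pnp Phi ->
  (forall v, apply h (apply g v) = v) -> (forall v, apply g (apply h v) = v) ->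
  pmax_sep (normalize (apply g Phi)) Phi = Qs h / sqnorm (apply g Phi).
Proof.
move=> HPn HP Hhg Hgh.
set u := apply g Phi; set N := sqnorm u; set r := Num.sqrt N.
have Hhu : apply h u = Phi by apply: Hhg.
have HN : 0 < N.
  rewrite lt_def sqnorm_ge0 andbT; apply/eqP => N0.
  have u0 : u = (fun _ => 0) := funext (sqnorm_eq0 N0).
  move: HPn; rewrite -Hhu u0 apply0 /sqnorm big1 => [/eqP|x _].
    by rewrite eq_sym oner_eq0.
  by rewrite cmod2_0.
have Hr : 0 < r by rewrite sqrtr_gt0.
have HrN : r ^+ 2 = N by rewrite sqr_sqrtr // ltW.
set A := normalize u.
have HA : A = (fun x => (r^-1)%:C%C * u x) by [].
have Hua : u = (fun x => r%:C%C * A x).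
  apply: funext => x; rewrite HA mulrA -rmorphM mulfV ?gt_eqF // rmorph1 mul1r //.
have HsA : sqnorm A = 1.
  by rewrite HA sqnormZ cmod2R exprVn HrN mulVf // gt_eqF.
have Hub : forall mu, Qset h mu -> mu <= N.
  by move=> mu [_ Hmu]; have := Hmu u; rewrite Hhu HPn mulr1.
have HQsup : has_sup (Qset h).
  split; first by exists 0; split => // v; rewrite mul0r sqnorm_ge0.
  by exists N => mu; apply: Hub.
have Hset_ub : forall K (M : 'I_K -> prodop R n L), separable_op M ->
    succ_prob M A Phi <= Qs h / N.
  move=> K M HM; rewrite ler_pdivlMr // mulrC.
  apply: (sup_upper_bound HQsup); rewrite /Qset /=; split.
    by apply: mulr_ge0; [apply: ltW | apply: succ_ge0].
  move=> v; rewrite /succ_prob [N * _]mulr_sumr [X in X <= _]mulr_suml.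
  apply: le_trans (HM v); apply: le_trans (sum_cond_le _ _); last by move=> k; apply: sqnorm_ge0.
  apply: ler_sum => k /asboolP [c Hc].
  rewrite Hc sqnormZ HPn mulr1.
  case: (eqVneq c 0) => [->|Hc0]; first by rewrite cmod2_0 mulr0 mul0r sqnorm_ge0.
  have HT : apply (comp (M k) g) Phi = (fun x => (r%:C%C * c) * Phi x).
    rewrite apply_comp -/u Hua applyZ Hc.
    by apply: funext => x; rewrite mulrA.
  have Hrc : r%:C%C * c != 0.
    by rewrite mulf_eq0 negb_or Hc0 andbT; apply/eqP => /(@complexI R) H; move: Hr; rewrite H ltxx.
  have := iso_of_fix HPn HP HT Hrc (apply h v).
  rewrite apply_comp Hgh => ->.
  by rewrite cmod2M cmod2R HrN.
have Hpset : has_sup [set p : R | exists (K : nat) (M : 'I_K -> prodop R n L),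
                     separable_op M /\ p = succ_prob M A Phi].
  split.
    by exists 0, 0%N, (fun _ => h); split; [move=> v; rewrite big_ord0 sqnorm_ge0 | rewrite /succ_prob big_ord0].
  exists 1 => p [K [M [HM ->]]]; rewrite -HsA; exact: succ_le.
apply/le_anti/andP; split.
  apply: ge_sup; first by case: Hpset.
  by move=> p [K [M [HM ->]]]; apply: Hset_ub.
rewrite ler_pdivrMr //; apply: ge_sup; first by case: HQsup.
move=> mu Hmu.
have HhA : apply h A = (fun x => (r^-1)%:C%C * Phi x) by rewrite HA applyZ Hhu.
have [p [Hp Hmup]] := lower_exists HPn HsA HhA Hmu.
rewrite -ler_pdivrMr //; apply: le_trans (_ : p <= _).
  by move: Hmup; rewrite cmod2R exprVn HrN.
exact: sup_upper_bound Hpset p Hp.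
Qed.

Lemma apply_tens_col (R : realType) n (L : finType) (h1 h2 : prodop R n L)
    (w : state R n (L * L)%type) y1 y2 :
  apply (tensop h1 h2) w (pairf y1 y2) =
  apply h1 (fun x1 => apply h2 (fun x2 => w (pairf x1 x2)) y2) y1.
Proof.
rewrite apply_tens_pair /apply; apply: eq_bigr => x1 _.
by rewrite mulr_sumr; apply: eq_bigr => x2 _; rewrite mulrA.
Qed.

Lemma tens_bound (R : realType) n (L : finType) (h1 h2 : prodop R n L) mu1 mu2 :
  Qset h1 mu1 -> Qset h2 mu2 -> Qset (tensop h1 h2) (mu1 * mu2).
Proof.
move=> [H10 H1] [H20 H2]; split; first exact: mulr_ge0.
move=> w.
pose col (y2 : {ffun 'I_n -> L}) : state R n L :=
  fun x1 => apply h2 (fun x2 => w (pairf x1 x2)) y2.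
have -> : sqnorm (apply (tensop h1 h2) w) = \sum_y2 sqnorm (apply h1 (col y2)).
  rewrite sqnorm_pair exchange_big /=; apply: eq_bigr => y2 _.
  by rewrite /sqnorm; apply: eq_bigr => y1 _; rewrite apply_tens_col.
rewrite mulr_sumr.
apply: (@le_trans _ _ (\sum_y2 mu2 * sqnorm (col y2))).
  apply: ler_sum => y2 _; rewrite [mu1 * mu2]mulrC -mulrA.
  by apply: ler_wpM2l => //; apply: H1.
rewrite sqnorm_pair -mulr_sumr.
have -> : \sum_y2 sqnorm (col y2) =
    \sum_x1 sqnorm (apply h2 (fun x2 => w (pairf x1 x2))).
  by rewrite /sqnorm exchange_big.
rewrite mulr_sumr; apply: ler_sum => x1 _; exact: H2.
Qed.

Lemma Qset0 (R : realType) n (L : finType) (h : prodop R n L) : Qset h 0.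
Proof. by split => // v; rewrite mul0r sqnorm_ge0. Qed.

Lemma Qset_sup (R : realType) n (L : finType) (h : prodop R n L) :
  (exists u, sqnorm (apply h u) = 1) -> has_sup (Qset h).
Proof.
move=> [u Hu]; split; first by exists 0; apply: Qset0.
by exists (sqnorm u) => mu [_ Hmu]; have := Hmu u; rewrite Hu mulr1.
Qed.

Lemma Qs_ge0 (R : realType) n (L : finType) (h : prodop R n L) :
  (exists u, sqnorm (apply h u) = 1) -> 0 <= Qs h.
Proof. by move=> Hu; apply: (sup_upper_bound (Qset_sup Hu)); apply: Qset0. Qed.

Lemma Qs_tens (R : realType) n (L : finType) (h1 h2 : prodop R n L) :
  (exists u1, sqnorm (apply h1 u1) = 1) -> (exists u2, sqnorm (apply h2 u2) = 1) ->
  Qs (tensop h1 h2) = Qs h1 * Qs h2.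
Proof.
move=> Hu1 Hu2.
have Hu12 : exists u, sqnorm (apply (tensop h1 h2) u) = 1.
  case: Hu1 => [u1 E1]; case: Hu2 => [u2 E2]; exists (tens2 u1 u2).
  by rewrite apply_tens2 sqnorm_tens2 E1 E2 mulr1.
have S1 := Qset_sup Hu1; have S2 := Qset_sup Hu2; have S12 := Qset_sup Hu12.
have Q10 := Qs_ge0 Hu1; have Q20 := Qs_ge0 Hu2; have Q120 := Qs_ge0 Hu12.
apply/le_anti/andP; split.
  apply: ge_sup; first by exists 0; apply: Qset0.
  move=> mu Hmu; case: (lerP mu 0) => [Hle|Hgt]; first by apply: le_trans Hle (mulr_ge0 _ _).
  case: Hmu => _ Hmu.
  have Hprod : forall v1 v2, mu * sqnorm (apply h1 v1) * sqnorm (apply h2 v2) <=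
                             sqnorm v1 * sqnorm v2.
    by move=> v1 v2; have := Hmu (tens2 v1 v2); rewrite apply_tens2 !sqnorm_tens2 mulrA.
  case: Hu1 => [u1 E1]; case: Hu2 => [u2 E2].
  have Hcl : forall v2, mu * sqnorm (apply h2 v2) <= Qs h1 * sqnorm v2.
    move=> v2; case: (eqVneq (sqnorm v2) 0) => [N0|Nn0].
      by have := Hprod u1 v2; rewrite E1 N0 !mulr0 mulr1.
    have Npos : 0 < sqnorm v2 by rewrite lt_def Nn0 sqnorm_ge0.
    rewrite -ler_pdivrMr //; apply: (sup_upper_bound S1); split.
      by apply: divr_ge0; [apply: mulr_ge0; [apply: ltW|apply: sqnorm_ge0]|apply: sqnorm_ge0].
    move=> v1; rewrite mulrAC ler_pdivrMr // mulrAC.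
    exact: Hprod.
  have HQ1 : 0 < Qs h1.
    have := Hcl u2; rewrite E2 mulr1 => H.
    rewrite lt_def Q10 andbT; apply/eqP => Q0; move: H; rewrite Q0 mul0r => H.
    by move: Hgt; rewrite ltNge H.
  rewrite mulrC -ler_pdivrMr //; apply: (sup_upper_bound S2); split.
    by apply: divr_ge0; [apply: ltW|apply: ltW].
  by move=> v2; rewrite mulrAC ler_pdivrMr // [sqnorm v2 * _]mulrC; apply: Hcl.
case: (eqVneq (Qs h1) 0) => [->|Q1n0]; first by rewrite mul0r.
have HQ1 : 0 < Qs h1 by rewrite lt_def Q1n0 Q10.
rewrite mulrC -ler_pdivlMr //; apply: ge_sup; first by exists 0; apply: Qset0.
move=> mu2 Hmu2; rewrite ler_pdivlMr //.
case: (eqVneq mu2 0) => [->|mu2n0]; first by rewrite mul0r.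
have Hmu2p : 0 < mu2 by rewrite lt_def mu2n0; case: Hmu2.
rewrite mulrC -ler_pdivlMr //; apply: ge_sup; first by exists 0; apply: Qset0.
move=> mu1 Hmu1; rewrite ler_pdivlMr //.
by apply: (sup_upper_bound S12); apply: tens_bound.
Qed.

Lemma normalize_tens2 (R : realType) n (L : finType) (a b : state R n L) :
  normalize (tens2 a b) = tens2 (normalize a) (normalize b).
Proof.
apply: funext => x; rewrite -[x]pairfK /normalize !tens2_pair sqnorm_tens2.
rewrite sqrtrM ?sqnorm_ge0 // invfM rmorphM /=; ring.
Qed.

Lemma stab2_Pnp2 (R : realType) n (L : finType) (psi : state R n L) :
  stab2_unitary psi -> Pnp (tens2 psi psi).
Proof. by move=> Hst S HS HSf v; apply: unitary_iso; apply: Hst. Qed.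

Lemma stab2_Pnp1 (R : realType) n (L : finType) (psi : state R n L) :
  sqnorm psi = 1 -> stab2_unitary psi -> Pnp psi.
Proof.
move=> Hn Hst S HS HSf v.
have HS' : forall i, invertible (tensop S (@idop R n L) i).
  move=> i; have [N [H1 H2]] := HS i.
  exists (tensop (fun _ => N) (@idop R n L) i); split.
    by apply: tens_locinv => // y x; apply: id_locinv.
  by apply: tens_locinv => // y x; apply: id_locinv.
have HU := Hst _ HS' (etrans (apply_tens2 _ _ _ _) (congr2 _ HSf (apply_id psi))).
have := unitary_iso HU (tens2 v psi).
by rewrite apply_tens2 apply_id !sqnorm_tens2 Hn !mulr1.
Qed.

Lemma inv_of_invertible (R : realType) n (L : finType) (g : prodop R n L) :
  (forall i, invertible (g i)) ->
  exists h : prodop R n L, (forall v, apply h (apply g v) = v) /\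
     (forall v, apply g (apply h v) = v) /\
     (forall i y x, \sum_z g i y z * h i z x = (y == x)%:R) /\
     (forall i y x, \sum_z h i y z * g i z x = (y == x)%:R).
Proof.
move=> Hg; have [h Hh] := choice Hg.
exists h; split; first by apply: apply_inv => i; case: (Hh i).
split; first by apply: apply_inv => i; case: (Hh i).
by split => i; case: (Hh i).
Qed.

Unset Implicit Arguments. Set Strict Implicit. Set Printing Implicit Defensive.

Theorem mainTheorem7 (R : realType) (n d : nat) (psi : state R n 'I_d)
    (g1 g2 : prodop R n 'I_d) :
  normalized psi ->
  stab2_unitary psi ->
  (forall i, invertible (g1 i)) ->
  (forall i, invertible (g2 i)) ->
  pmax_sep (tens2 (normalize (apply g1 psi)) (normalize (apply g2 psi)))
           (tens2 psi psi)
  = pmax_sep (normalize (apply g1 psi)) psi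
    * pmax_sep (normalize (apply g2 psi)) psi.
Proof.
move=> Hn Hst Hg1 Hg2.
have HP1 := stab2_Pnp1 Hn Hst; have HP2 := stab2_Pnp2 Hst.
have [h1 [Hhg1 [Hgh1 [L1 L1']]]] := inv_of_invertible Hg1.
have [h2 [Hhg2 [Hgh2 [L2 L2']]]] := inv_of_invertible Hg2.
rewrite (pmax_formula Hn HP1 Hhg1 Hgh1) (pmax_formula Hn HP1 Hhg2 Hgh2).
rewrite -normalize_tens2 -apply_tens2.
have HnPsi : sqnorm (tens2 psi psi) = 1 by rewrite sqnorm_tens2 Hn mulr1.
have HHG : forall v, apply (tensop h1 h2) (apply (tensop g1 g2) v) = v.
  by apply: apply_inv => i; apply: tens_locinv.
have HGH : forall v, apply (tensop g1 g2) (apply (tensop h1 h2) v) = v.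
  by apply: apply_inv => i; apply: tens_locinv.
rewrite (pmax_formula HnPsi HP2 HHG HGH).
rewrite Qs_tens; last first.
  by exists (apply g2 psi); rewrite Hhg2.
  by exists (apply g1 psi); rewrite Hhg1.
rewrite apply_tens2 sqnorm_tens2 invfM; ring.
Qed.
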